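(* Let $L$ and $L'$ be oriented flat virtual link diagrams such that $L$ can be transformed into $L'$ by one flat Reidemeister move. Then the fundamental virtual flat biquandles $VFB(L)$ and $VFB(L')$ are isomorphic as virtual flat biquandles.
   Context: A flat virtual link diagram is a virtual link diagram in which every real crossing is replaced by a flat crossing (no over/under information); crossings are either flat or virtual. Flat Reidemeister moves are the generalized Reidemeister moves ($\Omega_1,\Omega_2,\Omega_3$, the virtual moves $\Omega_1',\Omega_2',\Omega_3'$, and the mixed move $\Omega_3^s$ where a strand with two virtual crossings passes across another crossing) with all real crossings replaced by flat crossings; flat virtual links are equivalence classes of diagrams under these moves. A virtual flat biquandle is a set $X$ with two binary operations $a\ast b$ and $a\circ b$; writing $S_b(a)=a\ast b$ and $T_b(a)=a\circ b$, the maps $S_a,T_a:X\to X$ must satisfy, for all $a,b\in X$: (1) $S_aS_b=S_bS_a$, $T_aT_b=T_bT_a$, $S_aT_b=T_bS_a$; (2) $S_a=S_{T_b(a)}=S_{S_b(a)}$ and $T_a=T_{S_b(a)}=T_{T_b(a)}$; (3) $T_aS_a=S_aT_a=\mathrm{id}$. Homomorphisms preserve both operations. A v-arc of a diagram is a part of the diagram from one virtual crossing to the next virtual crossing (flat crossings are passed through; a component with no virtual crossings is a single v-arc). The fundamental virtual flat biquandle $VFB(L)$ is the virtual flat biquandle generated by the v-arcs of $L$ subject to the following relation at each virtual crossing: after rotating so both strands are oriented downward, if the incoming v-arc on the upper left is $a$ and the incoming v-arc on the upper right is $b$, then the outgoing v-arc continuing the strand from the upper left (exiting at lower right) equals $a\ast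 b$ and the outgoing v-arc continuing the strand from the upper right (exiting at lower left) equals $b\circ a$. No relations are imposed at flat crossings. *)

(* Defs.v *)
From Stdlib Require Import ClassicalEpsilon.
From mathcomp Require Import all_boot.

Set Implicit Arguments.
Unset Strict Implicit.
Unset Printing Implicit Defensive.

(* A diagram is a 4-valent/2-valent ribbon graph on the sphere:              *)
(*  - crossings  c : dC, each with 4 half-edges (darts) (c,i), i : 'I_4,     *)
(*    numbered COUNTERCLOCKWISE; opposite darts (c,i),(c,i+2) belong to the  *)
(*    same strand; dvirt c = true iff c is a virtual crossing, otherwise it  *)
(*    is a flat crossing;                                                    *)
(*  - "points"  p : dP, i.e. 2-valent dummy vertices subdividing an edge     *)
(*    (darts (p,false), (p,true)); they carry no geometric meaning and are   *)
(*    used to represent crossingless circles and the boundary of the disk    *)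
(*    in which a move takes place;                                           *)
(*  - dalpha : the edge involution (pairs the two ends of each edge);        *)
(*  - dout d = true iff the edge at dart d is oriented away from its vertex. *)

Notation dart C P := ((C * 'I_4) + (P * bool))%type.

Definition rot4 (i : 'I_4) : 'I_4 := inord (i.+1 %% 4).
Definition refl4 (i : 'I_4) : 'I_4 := inord ((4 - i) %% 4).

Record diagram := Diagram {
  dC : finType;
  dP : finType;
  dvirt : dC -> bool;
  dalpha : dart dC dP -> dart dC dP;
  dout : dart dC dP -> bool }.
Arguments dvirt : clear implicits.
Arguments dalpha : clear implicits.
Arguments dout : clear implicits.

Definition sigma (C P : Type) (d : dart C P) : dart C P :=
  match d with
  | inl (c, i) => inl (c, rot4 i)
  | inr (p, b) => inr (p, ~~ b)
  end.

Definition face_perm (D : diagram) (d : dart (dC D) (dP D)) : dart (dC D) (dP D) :=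
  sigma (dalpha D d).

Definition adj (D : diagram) : rel (dart (dC D) (dP D)) :=
  fun x y => (y == sigma x) || (y == dalpha D x).

Arguments face_perm : clear implicits.
Arguments adj : clear implicits.

(* Euler characteristic 2 on every connected component:
   V - E + F = 2K with V = #C + #P, E = 2 #C + #P. *)
Definition is_planar (D : diagram) : bool :=
  fcard (face_perm D) predT == #|dC D| + 2 * n_comp (adj D) predT.

Definition is_diagram (D : diagram) : Prop :=
  [/\ (forall d, dalpha D (dalpha D d) = d),
      (forall d, dalpha D d != d),
      (forall d, dout D (dalpha D d) = ~~ dout D d),
      ((forall c i, dout D (inl (c, rot4 (rot4 i))) = ~~ dout D (inl (c, i))) /\
       (forall p, dout D (inr (p, true)) = ~~ dout D (inr (p, false))))
    & is_planar D].

Definition diag_iso (D1 D2 : diagram) : Prop :=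
  exists (fC : dC D1 -> dC D2) (fP : dP D1 -> dP D2)
         (r : dC D1 -> nat) (s : dP D1 -> bool),
    let f := fun d : dart (dC D1) (dP D1) =>
      match d with
      | inl (c, i) => inl (fC c, iter (r c) rot4 i)
      | inr (p, b) => inr (fP p, s p (+) b)
      end : dart (dC D2) (dP D2) in
    [/\ bijective fC, bijective fP,
        (forall c, dvirt D2 (fC c) = dvirt D1 c),
        (forall d, dalpha D2 (f d) = f (dalpha D1 d))
      & (forall d, dout D2 (f d) = dout D1 d)].

(* Tangles with n boundary points (numbered counterclockwise) and gluing.    *)
(* A boundary point j is a dart "inr j"; in the glued diagram it becomes a   *)
(* 2-valent point whose dart "true" lies on the inner side (T) and whose     *)
(* dart "false" lies on the outer side (O).                                  *)

Record tangle (n : nat) := Tangle {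
  tC : finType;
  tP : finType;
  tvirt : tC -> bool;
  talpha : (dart tC tP + 'I_n)%type -> (dart tC tP + 'I_n)%type }.
Arguments talpha {n} t _.
Arguments tvirt {n} t _.

Section Glue.
Variables (n : nat) (O : tangle n) (oO : (dart (tC O) (tP O) + 'I_n)%type -> bool)
          (T : tangle n) (oT : (dart (tC T) (tP T) + 'I_n)%type -> bool).

Definition gC : finType := (tC O + tC T)%type.
Definition gP : finType := ((tP O + tP T) + 'I_n)%type.

Definition embO (x : (dart (tC O) (tP O) + 'I_n)%type) : dart gC gP :=
  match x with
  | inl (inl (c, i)) => inl (inl c, i)
  | inl (inr (p, b)) => inr (inl (inl p), b)
  | inr j => inr (inr j, false)
  end.

Definition embT (x : (dart (tC T) (tP T) + 'I_n)%type) : dart gC gP :=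
  match x with
  | inl (inl (c, i)) => inl (inr c, i)
  | inl (inr (p, b)) => inr (inl (inr p), b)
  | inr j => inr (inr j, true)
  end.

Definition galpha (g : dart gC gP) : dart gC gP :=
  match g with
  | inl (inl c, i) => embO (talpha O (inl (inl (c, i))))
  | inl (inr c, i) => embT (talpha T (inl (inl (c, i))))
  | inr (inl (inl p), b) => embO (talpha O (inl (inr (p, b))))
  | inr (inl (inr p), b) => embT (talpha T (inl (inr (p, b))))
  | inr (inr j, false) => embO (talpha O (inr j))
  | inr (inr j, true) => embT (talpha T (inr j))
  end.

Definition gout (g : dart gC gP) : bool :=
  match g with
  | inl (inl c, i) => oO (inl (inl (c, i)))
  | inl (inr c, i) => oT (inl (inl (c, i)))
  | inr (inl (inl p), b) => oO (inl (inr (p, b)))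
  | inr (inl (inr p), b) => oT (inl (inr (p, b)))
  | inr (inr j, false) => oO (inr j)
  | inr (inr j, true) => oT (inr j)
  end.

Definition gvirt (c : gC) : bool :=
  match c with inl c => tvirt O c | inr c => tvirt T c end.

Definition glue : diagram := @Diagram gC gP gvirt galpha gout.
End Glue.
Arguments glue : clear implicits.

(* mirror image of a tangle: reverse the cyclic order at every crossing *)
Definition mref (n : nat) (C P : Type) (d : (dart C P + 'I_n)%type) : (dart C P + 'I_n)%type :=
  match d with
  | inl (inl (c, i)) => inl (inl (c, refl4 i))
  | _ => d
  end.

Definition mirror n (T : tangle n) : tangle n :=
  @Tangle n (tC T) (tP T) (tvirt T) (fun d => mref (talpha T (mref d))).

(* Standard local pictures, given by tables.  A tangle with k crossings and  *)
(* n boundary points: dart (c,i) has code 4c+i, boundary point j has code    *)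
(* 4k+j; the edges are given as a list of pairs of codes.                    *)

Definition code k n (d : (dart 'I_k 'I_0 + 'I_n)%type) : nat :=
  match d with
  | inl (inl (c, i)) => 4 * c + i
  | inl (inr _) => 0
  | inr j => 4 * k + j
  end.

Definition decode k n (y : nat) : option (dart 'I_k 'I_0 + 'I_n)%type :=
  if y < 4 * k then omap (fun c : 'I_k => inl (inl (c, inord (y %% 4)))) (insub (y %/ 4))
  else omap (fun j : 'I_n => inr j) (insub (y - 4 * k)).

Definition partner (s : seq (nat * nat)) (x : nat) : option nat :=
  match [seq e <- s | (e.1 == x) || (e.2 == x)] with
  | e :: _ => Some (if e.1 == x then e.2 else e.1)
  | [::] => None
  end.

Definition table_tangle k n (kind : 'I_k -> bool) (s : seq (nat * nat)) : tangle n :=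
  @Tangle n 'I_k 'I_0 kind
    (fun d => odflt d (obind (@decode k n) (partner s (code d)))).

Definition kink (v : bool) : tangle 2 :=
  @table_tangle 1 2 (fun _ => v) [:: (2, 3); (4, 0); (5, 1)].
Definition arc1 : tangle 2 := @table_tangle 0 2 (fun _ => false) [:: (0, 1)].

(* Omega_2 : a bigon (both crossings flat, or both virtual) vs. two arcs;
   boundary points 0,1,2,3 = top-left, bottom-left, bottom-right, top-right. *)
Definition bigon (v : bool) : tangle 4 :=
  @table_tangle 2 4 (fun _ => v)
    [:: (8, 0); (11, 3); (1, 4); (2, 7); (5, 9); (6, 10)].
Definition arcs2 : tangle 4 :=
  @table_tangle 0 4 (fun _ => false) [:: (0, 1); (2, 3)].

(* Omega_3 : three strands joining boundary points 0-3, 1-4, 2-5; crossing 0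
   (X) is between strands 1-4 and 2-5, crossings 1 (Y) and 2 (Z) lie on the
   moving strand 0-3.  tri / tri' are the two sides of the triple point. *)
Definition tri (kind : 'I_3 -> bool) : tangle 6 :=
  @table_tangle 3 6 kind
    [:: (0, 7); (1, 11); (2, 16); (3, 17); (4, 12); (5, 13); (6, 8); (9, 14); (10, 15)].
Definition tri' (kind : 'I_3 -> bool) : tangle 6 :=
  @table_tangle 3 6 kind
    [:: (0, 13); (1, 14); (2, 5); (3, 9); (4, 10); (6, 15); (7, 16); (8, 12); (11, 17)].

Inductive std_move : forall n, tangle n -> tangle n -> Prop :=
  | Om1  : std_move (kink false) arc1
  | Om1v : std_move (kink true) arc1
  | Om2  : std_move (bigon false) arcs2
  | Om2v : std_move (bigon true) arcs2
  | Om3  : std_move (tri (fun _ => false)) (tri' (fun _ => false))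
  | Om3v : std_move (tri (fun _ => true)) (tri' (fun _ => true))
  | Om3s : std_move (tri (fun c => c != ord0)) (tri' (fun c => c != ord0)).

Inductive move_pair : forall n, tangle n -> tangle n -> Prop :=
  | mp_std n (T T' : tangle n) : std_move T T' -> move_pair T T'
  | mp_sym n (T T' : tangle n) : move_pair T T' -> move_pair T' T
  | mp_mir n (T T' : tangle n) : move_pair T T' -> move_pair (mirror T) (mirror T').

(* L' is obtained from L by one flat Reidemeister move: both are obtained by
   gluing the same (oriented) outside O to the two sides of a move. *)
Definition flat_move (L L' : diagram) : Prop :=
  exists n (O T T' : tangle n)
    (oO : (dart (tC O) (tP O) + 'I_n)%type -> bool)
    (oT : (dart (tC T) (tP T) + 'I_n)%type -> bool)
    (oT' : (dart (tC T') (tP T') + 'I_n)%type -> bool),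
    [/\ move_pair T T', diag_iso (glue n O oO T oT) L & diag_iso (glue n O oO T' oT') L'].

Definition is_vfb (X : Type) (star circ : X -> X -> X) : Prop :=
  (forall a b x, star (star x b) a = star (star x a) b) /\
  (forall a b x, circ (circ x b) a = circ (circ x a) b) /\
  (forall a b x, star (circ x b) a = circ (star x a) b) /\
  (forall a b x, star x a = star x (circ a b) /\ star x a = star x (star a b)) /\
  (forall a b x, circ x a = circ x (star a b) /\ circ x a = circ x (circ a b)) /\
  (forall a x, circ (star x a) a = x /\ star (circ x a) a = x).

Definition vfb_iso (X Y : Type) (sX cX : X -> X -> X) (sY cY : Y -> Y -> Y) : Prop :=
  exists f : X -> Y, [/\ bijective f,
    (forall a b, f (sX a b) = sY (f a) (f b)) &
    (forall a b, f (cX a b) = cY (f a) (f b))].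

Inductive term (G : Type) :=
  | Gen of G
  | Star of term G & term G
  | Circ of term G & term G.

Section FundamentalVFB.
Variable D : diagram.
Notation G := (dart (dC D) (dP D)).
Notation UL c i := (Gen (inl (c, i)) : term G).
Notation LL c i := (Gen (inl (c, rot4 i)) : term G).
Notation LR c i := (Gen (inl (c, rot4 (rot4 i))) : term G).
Notation UR c i := (Gen (inl (c, rot4 (rot4 (rot4 i)))) : term G).

(* Generators: darts (ends of edges); edges identified along a v-arc, i.e.
   through flat crossings and 2-valent points; relations at virtual
   crossings: with both strands oriented downwards, UL,UR incoming, LL,LR
   outgoing (ccw order UL, LL, LR, UR); UL is the incoming dart whose ccw
   successor is outgoing. *)
Inductive vcong : term G -> term G -> Prop :=
  | vc_refl t : vcong t t
  | vc_sym t u : vcong t u -> vcong u t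
  | vc_trans t u w : vcong t u -> vcong u w -> vcong t w
  | vc_star a a' b b' : vcong a a' -> vcong b b' -> vcong (Star a b) (Star a' b')
  | vc_circ a a' b b' : vcong a a' -> vcong b b' -> vcong (Circ a b) (Circ a' b')
  | ax_SS a b x : vcong (Star (Star x b) a) (Star (Star x a) b)
  | ax_TT a b x : vcong (Circ (Circ x b) a) (Circ (Circ x a) b)
  | ax_ST a b x : vcong (Star (Circ x b) a) (Circ (Star x a) b)
  | ax_S_T a b x : vcong (Star x a) (Star x (Circ a b))
  | ax_S_S a b x : vcong (Star x a) (Star x (Star a b))
  | ax_T_S a b x : vcong (Circ x a) (Circ x (Star a b))
  | ax_T_T a b x : vcong (Circ x a) (Circ x (Circ a b))
  | ax_TS a x : vcong (Circ (Star x a) a) x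
  | ax_ST' a x : vcong (Star (Circ x a) a) x
  | rel_edge d : vcong (Gen d) (Gen (dalpha D d))
  | rel_point p : vcong (Gen (inr (p, false))) (Gen (inr (p, true)))
  | rel_flat c i : dvirt D c = false -> vcong (UL c i) (LR c i)
  | rel_virtS c i : dvirt D c -> dout D (inl (c, i)) = false ->
      dout D (inl (c, rot4 i)) = true -> vcong (LR c i) (Star (UL c i) (UR c i))
  | rel_virtT c i : dvirt D c -> dout D (inl (c, i)) = false ->
      dout D (inl (c, rot4 i)) = true -> vcong (LL c i) (Circ (UR c i) (UL c i)).

Definition VFB : Type := { A : term G -> Prop | exists t, A = vcong t }.

Definition vclass (t : term G) : VFB := exist _ (vcong t) (ex_intro _ t erefl).
Definition vrep (A : VFB) : term G :=
  proj1_sig (constructive_indefinite_description _ (proj2_sig A)).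

Definition vstar (A B : VFB) : VFB := vclass (Star (vrep A) (vrep B)).
Definition vcirc (A B : VFB) : VFB := vclass (Circ (vrep A) (vrep B)).
End FundamentalVFB.

(* Main.v *)
Require Import Defs.
From mathcomp Require Import all_boot.
From Stdlib Require ZArith.
From Stdlib Require Import BinNums BinInt BinPos Pnat Lia.
From Stdlib Require Import ClassicalEpsilon FunctionalExtensionality PropExtensionality ProofIrrelevance.
Set Implicit Arguments. Unset Strict Implicit. Unset Printing Implicit Defensive.

Fixpoint tsub (A B : Type) (f : A -> term B) (t : term A) : term B :=
  match t with
  | Gen a => f a
  | Star x y => Star (tsub f x) (tsub f y)
  | Circ x y => Circ (tsub f x) (tsub f y)
  end.

Lemma tsub_comp A B C (f : A -> term B) (g : B -> term C) t :
  tsub g (tsub f t) = tsub (fun x => tsub g (f x)) t.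
Proof. by elim: t => //= x -> y ->. Qed.

Lemma tsub_ext A B (f g : A -> term B) t : (forall x, f x = g x) -> tsub f t = tsub g t.
Proof. by move=> H; elim: t => //= x -> y ->. Qed.

Fixpoint rt (G : Type) (t : term G) : G :=
  match t with Gen g => g | Star x _ => rt x | Circ x _ => rt x end.

Section NFdef.
Variable G : finType.
Fixpoint vec (t : term G) (h : G) : Z :=
  match t with
  | Gen _ => 0%Z
  | Star x b => Z.add (vec x h) (if rt b == h then 1%Z else 0%Z)
  | Circ x b => Z.sub (vec x h) (if rt b == h then 1%Z else 0%Z)
  end.
Definition nfeq (a b : term G) : bool :=
  (rt a == rt b) && [forall h, Z.eqb (vec a h) (vec b h)].
Definition pw (a : term G) (h : G) (z : Z) : term G :=
  match z with
  | Z0 => a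
  | Zpos p => ssrnat.iter (Pos.to_nat p) (fun x => Star x (Gen h)) a
  | Zneg p => ssrnat.iter (Pos.to_nat p) (fun x => Circ x (Gen h)) a
  end.
Definition canf (g : G) (v : G -> Z) (l : seq G) : term G :=
  foldr (fun h acc => pw acc h (v h)) (Gen g) l.
End NFdef.

Section Cong.
Variable D : diagram.
Notation G := (dart (dC D) (dP D)).
Notation "a ~~> b" := (@vcong D a b) (at level 70).

Lemma vtr (a b c : term G) : a ~~> b -> b ~~> c -> a ~~> c.
Proof. exact: vc_trans. Qed.
Lemma vsym (a b : term G) : a ~~> b -> b ~~> a.
Proof. exact: vc_sym. Qed.
Lemma vrefl (a : term G) : a ~~> a.
Proof. exact: vc_refl. Qed.
Lemma veq (a b : term G) : a = b -> a ~~> b.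
Proof. by move=> ->; apply: vc_refl. Qed.
Lemma vstarL (a a' b : term G) : a ~~> a' -> Star a b ~~> Star a' b.
Proof. by move=> H; apply: vc_star => //; apply: vc_refl. Qed.
Lemma vstarR (a b b' : term G) : b ~~> b' -> Star a b ~~> Star a b'.
Proof. by move=> H; apply: vc_star => //; apply: vc_refl. Qed.
Lemma vcircL (a a' b : term G) : a ~~> a' -> Circ a b ~~> Circ a' b.
Proof. by move=> H; apply: vc_circ => //; apply: vc_refl. Qed.
Lemma vcircR (a b b' : term G) : b ~~> b' -> Circ a b ~~> Circ a b'.
Proof. by move=> H; apply: vc_circ => //; apply: vc_refl. Qed.

Lemma root_star (x b : term G) : Star x b ~~> Star x (Gen (rt b)) /\ Circ x b ~~> Circ x (Gen (rt b)).
Proof.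
elim: b x => [g|b1 IH1 b2 _|b1 IH1 b2 _] x /=; first by split; apply: vrefl.
- case: (IH1 x) => H1 H2; split.
  + apply: vtr H1; apply: vsym; exact: ax_S_S.
  + apply: vtr H2; apply: vsym; exact: ax_T_S.
- case: (IH1 x) => H1 H2; split.
  + apply: vtr H1; apply: vsym; exact: ax_S_T.
  + apply: vtr H2; apply: vsym; exact: ax_T_T.
Qed.

Lemma tsub_cong (h : G -> term G) t : (forall x, Gen x ~~> h x) -> t ~~> tsub h t.
Proof.
move=> H; elim: t => [g|x IHx y IHy|x IHx y IHy] //=; first by apply: vc_star.
by apply: vc_circ.
Qed.

Lemma iter_cong (F : term G -> term G) n a a' :
  (forall x y, x ~~> y -> F x ~~> F y) -> a ~~> a' -> ssrnat.iter n F a ~~> ssrnat.iter n F a'.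
Proof. by move=> HF; elim: n => //= n IH H; apply: HF; apply: IH. Qed.

Lemma pw_cong a a' h z : a ~~> a' -> pw a h z ~~> pw a' h z.
Proof.
case: z => //= p; apply: iter_cong => x y H; [exact: vstarL | exact: vcircL].
Qed.

Lemma pw_comm a h z k :
  Star (pw a h z) (Gen k) ~~> pw (Star a (Gen k)) h z /\
  Circ (pw a h z) (Gen k) ~~> pw (Circ a (Gen k)) h z.
Proof.
case: z => [|p|p] /=; first by split; apply: vrefl.
- elim: (Pos.to_nat p) => [|m [IH1 IH2]] /=; first by split; apply: vrefl.
  split.
  + apply: vtr; first exact: ax_SS. exact: vstarL.
  + apply: vtr; first by apply: vsym; exact: ax_ST. exact: vstarL.
- elim: (Pos.to_nat p) => [|m [IH1 IH2]] /=; first by split; apply: vrefl.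
  split.
  + apply: vtr; first exact: ax_ST. exact: vcircL.
  + apply: vtr; first exact: ax_TT. exact: vcircL.
Qed.

Lemma pw_succ a h z :
  Star (pw a h z) (Gen h) ~~> pw a h (Z.add z 1) /\
  Circ (pw a h z) (Gen h) ~~> pw a h (Z.sub z 1).
Proof.
case: z => [|p|p].
- by split; apply: vrefl.
- split.
  + rewrite /= Pos.add_1_r Pos2Nat.inj_succ /=; exact: vrefl.
  + case: (Pos.eq_dec p 1) => [->|np]; first by apply: ax_TS.
    have [q ->] : exists q, p = Pos.succ q.
      by exists (Pos.pred p); rewrite Pos.succ_pred.
    have -> : Z.sub (Zpos (Pos.succ q)) 1 = Zpos q by lia.
    rewrite /= Pos2Nat.inj_succ /=. by apply: ax_TS.
- split.
  + case: (Pos.eq_dec p 1) => [->|np]; first by apply: ax_ST'.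
    have [q ->] : exists q, p = Pos.succ q.
      by exists (Pos.pred p); rewrite Pos.succ_pred.
    have -> : Z.add (Zneg (Pos.succ q)) 1 = Zneg q by lia.
    rewrite /= Pos2Nat.inj_succ /=. by apply: ax_ST'.
  + rewrite /= Pos.add_1_r Pos2Nat.inj_succ /=; exact: vrefl.
Qed.

Lemma canf_eq_in g v v' (l : seq G) : {in l, v =1 v'} -> canf g v l = canf g v' l.
Proof.
elim: l => //= k l IH H; rewrite IH ?H ?mem_head // => x Hx; apply: H.
by rewrite in_cons Hx orbT.
Qed.

Lemma canf_step g v (l : seq G) h : uniq l -> h \in l ->
  Star (canf g v l) (Gen h) ~~> canf g (fun k => if k == h then Z.add (v k) 1 else v k) l /\
  Circ (canf g v l) (Gen h) ~~> canf g (fun k => if k == h then Z.sub (v k) 1 else v k) l.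
Proof.
elim: l => //= k l IH /andP [kl ul]; rewrite in_cons; case: (eqVneq h k) => [Ehk _ | nk /= hl].
- subst h.
  have E1 : canf g (fun k0 => if k0 == k then Z.add (v k0) 1 else v k0) l = canf g v l.
    apply: canf_eq_in => x xl; case: eqP => // ex; move: kl; by rewrite -ex xl.
  have E2 : canf g (fun k0 => if k0 == k then Z.sub (v k0) 1 else v k0) l = canf g v l.
    apply: canf_eq_in => x xl; case: eqP => // ex; move: kl; by rewrite -ex xl.
  case: (pw_succ (canf g v l) k (v k)) => P1 P2; split.
  + eapply vtr; first exact: P1. apply: pw_cong; apply: veq; by rewrite E1.
  + eapply vtr; first exact: P2. apply: pw_cong; apply: veq; by rewrite E2.
  case: (IH ul hl) => H1 H2; case: (pw_comm (canf g v l) k (v k) h) => C1 C2; split.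
  + eapply vtr; first exact: C1. by apply: pw_cong.
  + eapply vtr; first exact: C2. by apply: pw_cong.
Qed.

Lemma canf0 g (l : seq G) : canf g (fun _ => 0%Z) l = Gen g.
Proof. by elim: l => //= k l ->. Qed.

Lemma nf_can (t : term G) : t ~~> canf (rt t) (vec t) (enum (@predT G)).
Proof.
elim: t => [g|x IHx b _|x IHx b _] /=.
- by rewrite canf0; apply: vrefl.
- case: (root_star x b) => H _; eapply vtr; first exact: H.
  eapply vtr; first exact: (vstarL _ IHx).
  case: (canf_step (rt x) (vec x) (enum_uniq (@predT G)) (mem_enum (@predT G) (rt b))) => S _.
  eapply vtr; first exact: S. rewrite (@canf_eq_in _ _ (fun h => Z.add (vec x h) (if rt b == h then 1%Z else 0%Z))).
    exact: vrefl.
  move=> k _; rewrite eq_sym; case: eqP => _ //; by rewrite Z.add_0_r.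
- case: (root_star x b) => _ H; eapply vtr; first exact: H.
  eapply vtr; first exact: (vcircL _ IHx).
  case: (canf_step (rt x) (vec x) (enum_uniq (@predT G)) (mem_enum (@predT G) (rt b))) => _ S.
  eapply vtr; first exact: S. rewrite (@canf_eq_in _ _ (fun h => Z.sub (vec x h) (if rt b == h then 1%Z else 0%Z))).
    exact: vrefl.
  move=> k _; rewrite eq_sym; case: eqP => _ //; by rewrite Z.sub_0_r.
Qed.

Lemma nfeq_sound (a b : term G) : nfeq a b -> a ~~> b.
Proof.
case/andP => /eqP Er /forallP Ev.
eapply vtr; first exact: (nf_can a). apply: vsym; eapply vtr; first exact: (nf_can b).
rewrite Er (@canf_eq_in _ (vec a) (vec b)); first exact: vrefl.
by move=> h _; apply/Z.eqb_eq; rewrite Ev.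
Qed.
End Cong.

Definition vhom (D1 D2 : diagram) (f : dart (dC D1) (dP D1) -> term (dart (dC D2) (dP D2))) :=
  forall t u, @vcong D1 t u -> @vcong D2 (tsub f t) (tsub f u).
Arguments vhom : clear implicits.

Lemma vhom_base (D1 D2 : diagram) (f : dart (dC D1) (dP D1) -> term (dart (dC D2) (dP D2))) :
 (forall d, @vcong D2 (f d) (f (dalpha D1 d))) ->
 (forall p, @vcong D2 (f (inr (p,false))) (f (inr (p,true)))) ->
 (forall c i, dvirt D1 c = false -> @vcong D2 (f (inl (c,i))) (f (inl (c, rot4 (rot4 i))))) ->
 (forall c i, dvirt D1 c -> dout D1 (inl (c,i)) = false -> dout D1 (inl (c, rot4 i)) = true ->
   @vcong D2 (f (inl (c, rot4 (rot4 i)))) (Star (f (inl (c,i))) (f (inl (c, rot4 (rot4 (rot4 i)))))) /\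
   @vcong D2 (f (inl (c, rot4 i))) (Circ (f (inl (c, rot4 (rot4 (rot4 i))))) (f (inl (c,i))))) ->
 vhom D1 D2 f.
Proof.
move=> He Hp Hf Hv t u; elim=> /=.
- move=> *; exact: vc_refl.
- move=> *; exact: vc_sym.
- move=> *; apply: vc_trans; eassumption.
- move=> *; exact: vc_star.
- move=> *; exact: vc_circ.
- move=> *; exact: ax_SS.
- move=> *; exact: ax_TT.
- move=> *; exact: ax_ST.
- move=> *; exact: ax_S_T.
- move=> *; exact: ax_S_S.
- move=> *; exact: ax_T_S.
- move=> *; exact: ax_T_T.
- move=> *; exact: ax_TS.
- move=> *; exact: ax_ST'.
- by move=> d; apply: He.
- by move=> p; apply: Hp.
- by move=> c i H; apply: Hf.
- by move=> c i H1 H2 H3; case: (Hv c i H1 H2 H3).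
- by move=> c i H1 H2 H3; case: (Hv c i H1 H2 H3).
Qed.

Definition vequiv (D1 D2 : diagram) : Prop :=
  exists (f : dart (dC D1) (dP D1) -> term (dart (dC D2) (dP D2)))
         (g : dart (dC D2) (dP D2) -> term (dart (dC D1) (dP D1))),
  [/\ vhom D1 D2 f, vhom D2 D1 g,
      (forall x, @vcong D1 (tsub g (f x)) (Gen x)) &
      (forall y, @vcong D2 (tsub f (g y)) (Gen y))].

Lemma rt_term (D1 D2 : diagram) (f : dart (dC D1) (dP D1) -> term (dart (dC D2) (dP D2))) g t :
  (forall x, @vcong D1 (tsub g (f x)) (Gen x)) ->
  @vcong D1 (tsub g (@tsub _ (dart (dC D2) (dP D2)) f t)) t.
Proof.
move=> H; rewrite tsub_comp; apply: vc_sym; apply: tsub_cong => x; exact: vc_sym.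
Qed.

Lemma vequiv_sym D1 D2 : vequiv D1 D2 -> vequiv D2 D1.
Proof. by case=> f [g [H1 H2 H3 H4]]; exists g, f; split. Qed.

Lemma vequiv_trans D1 D2 D3 : vequiv D1 D2 -> vequiv D2 D3 -> vequiv D1 D3.
Proof.
case=> f [g [F1 G1 R1 S1]] [f' [g' [F2 G2 R2 S2]]].
exists (fun x => tsub f' (f x)), (fun z => tsub g (g' z)); split.
- move=> t u H; rewrite -!tsub_comp; apply: F2; exact: F1.
- move=> t u H; rewrite -!tsub_comp; apply: G1; exact: G2.
- move=> x; rewrite -tsub_comp.
  apply: vc_trans; last exact: (R1 x).
  apply: G1; apply: rt_term; exact: R2.
- move=> y; rewrite -tsub_comp.
  apply: vc_trans; last exact: (S2 y).
  apply: F2; apply: rt_term; exact: S1.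
Qed.

Lemma sig_eq (A : Type) (P : A -> Prop) (x y : sig P) : proj1_sig x = proj1_sig y -> x = y.
Proof.
case: x => a p; case: y => b q /= E; subst b; by rewrite (proof_irrelevance _ p q).
Qed.

Section Quot.
Variable D : diagram.
Notation G := (dart (dC D) (dP D)).

Lemma vclass_eq (t u : term G) : vcong t u -> vclass t = vclass u.
Proof.
move=> H; rewrite /vclass.
have E : @vcong D t = @vcong D u.
  apply: functional_extensionality => x; apply: propositional_extensionality; split => Hx.
  - apply: vc_trans (vc_sym H) Hx.
  - apply: vc_trans H Hx.
by apply: sig_eq.
Qed.

Lemma vrep_spec (A : VFB D) : proj1_sig A = @vcong D (vrep A).
Proof.
rewrite /vrep; case: (constructive_indefinite_description _ _) => t /= ->; done.
Qed.

Lemma vclass_vrep (A : VFB D) : vclass (vrep A) = A.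
Proof.
by apply: sig_eq; rewrite /= -vrep_spec.
Qed.

Lemma vrep_vclass (t : term G) : vcong (vrep (vclass t)) t.
Proof.
have := vrep_spec (vclass t); rewrite /= => E.
have : @vcong D t t by apply: vc_refl.
by rewrite E.
Qed.
End Quot.

Lemma vequiv_iso D1 D2 : vequiv D1 D2 ->
  vfb_iso (@vstar D1) (@vcirc D1) (@vstar D2) (@vcirc D2).
Proof.
case=> f [g [F G R S]].
pose Fm := fun A : VFB D1 => vclass (tsub f (vrep A)).
pose Gm := fun A : VFB D2 => vclass (tsub g (vrep A)).
exists Fm; split.
- exists Gm.
  + move=> A; rewrite /Fm /Gm -[RHS]vclass_vrep; apply: vclass_eq.
    apply: vc_trans; first by apply: G; apply: vrep_vclass.
    exact: rt_term.
  + move=> A; rewrite /Fm /Gm -[RHS]vclass_vrep; apply: vclass_eq.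
    apply: vc_trans; first by apply: F; apply: vrep_vclass.
    exact: rt_term.
- move=> A B; rewrite /Fm /vstar; apply: vclass_eq.
  apply: vc_trans; first by apply: F; apply: vrep_vclass.
  by apply: vc_star; apply: vc_sym; apply: vrep_vclass.
- move=> A B; rewrite /Fm /vcirc; apply: vclass_eq.
  apply: vc_trans; first by apply: F; apply: vrep_vclass.
  by apply: vc_circ; apply: vc_sym; apply: vrep_vclass.
Qed.

Lemma val_rot4 (i : 'I_4) : val (rot4 i) = (i.+1 %% 4)%N.
Proof. by rewrite /rot4; apply: inordK; rewrite ltn_mod. Qed.

Lemma rot4_4 (i : 'I_4) : rot4 (rot4 (rot4 (rot4 i))) = i.
Proof.
apply: val_inj; rewrite !val_rot4.
by case: i => [[|[|[|[|m]]]] Hm].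
Qed.

Lemma iter_rot4_comm n (i : 'I_4) : iter n rot4 (rot4 i) = rot4 (iter n rot4 i).
Proof. by rewrite -iterSr iterS. Qed.

Lemma iter_rot4_4 m (i : 'I_4) : iter (4 * m) rot4 i = i.
Proof.
elim: m => // m IH; rewrite mulnS iterD IH /=; exact: rot4_4.
Qed.

Definition dart_iso (D1 D2 : diagram) (h : dart (dC D1) (dP D1) -> dart (dC D2) (dP D2)) :=
  [/\ forall d, h (sigma d) = sigma (h d),
      forall d, h (dalpha D1 d) = dalpha D2 (h d),
      forall d, dout D2 (h d) = dout D1 d,
      forall c i, exists c' i', h (inl (c,i)) = inl (c', i') /\ dvirt D2 c' = dvirt D1 c &
      forall p b, exists p' b', h (inr (p,b)) = inr (p', b')].
Arguments dart_iso : clear implicits.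

Lemma dart_iso_hom D1 D2 h : dart_iso D1 D2 h -> vhom D1 D2 (fun d => Gen (h d)).
Proof.
case=> Hs Ha Ho Hc Hp; apply: vhom_base.
- move=> d; rewrite Ha; exact: rel_edge.
- move=> p; case: (Hp p false) => p' [b' E].
  have E2 : h (inr (p, true)) = inr (p', ~~ b') by rewrite -[inr (p,true)]/(sigma (inr (p,false))) Hs E.
  rewrite E E2; case: b' {E E2}; [apply: vc_sym; exact: rel_point | exact: rel_point].
- move=> c i Hv; case: (Hc c i) => c' [i' [E Ev]].
  have E2 : h (inl (c, rot4 (rot4 i))) = inl (c', rot4 (rot4 i')).
    by rewrite -[inl (c, rot4 (rot4 i))]/(sigma (sigma (inl (c,i)))) !Hs E.
  rewrite E E2; apply: rel_flat; by rewrite Ev.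
- move=> c i Hv H1 H2; case: (Hc c i) => c' [i' [E Ev]].
  have E1 : h (inl (c, rot4 i)) = inl (c', rot4 i').
    by rewrite -[inl (c, rot4 i)]/(sigma (inl (c,i))) !Hs E.
  have E2 : h (inl (c, rot4 (rot4 i))) = inl (c', rot4 (rot4 i')).
    by rewrite -[inl (c, rot4 (rot4 i))]/(sigma (sigma (inl (c,i)))) !Hs E.
  have E3 : h (inl (c, rot4 (rot4 (rot4 i)))) = inl (c', rot4 (rot4 (rot4 i'))).
    by rewrite -[inl (c, rot4 (rot4 (rot4 i)))]/(sigma (sigma (sigma (inl (c,i))))) !Hs E.
  have V : dvirt D2 c' by rewrite Ev.
  have O1 : dout D2 (inl (c', i')) = false by rewrite -E Ho.
  have O2 : dout D2 (inl (c', rot4 i')) = true by rewrite -E1 Ho.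
  rewrite E E1 E2 E3; split; [exact: rel_virtS | exact: rel_virtT].
Qed.

Lemma dart_iso_inv D1 D2 h h' : dart_iso D1 D2 h -> cancel h h' -> cancel h' h -> dart_iso D2 D1 h'.
Proof.
case=> Hs Ha Ho Hc Hp K1 K2; split.
- move=> d; apply: (can_inj K1); by rewrite Hs !K2.
- move=> d; apply: (can_inj K1); by rewrite Ha !K2.
- by move=> d; rewrite -Ho K2.
- move=> c' i'; case E: (h' (inl (c', i'))) => [[c i]|[p b]].
  + exists c, i; split => //; case: (Hc c i) => c2 [i2 [E2 V]].
    by move: E2; rewrite -E K2 => -[-> _]; rewrite V.
  + by case: (Hp p b) => p2 [b2]; rewrite -E K2.
- move=> p' b'; case E: (h' (inr (p', b'))) => [[c i]|[p b]].
  + by case: (Hc c i) => c2 [i2 [E2 V]]; move: E2; rewrite -E K2.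
  + by exists p, b.
Qed.

Lemma dart_iso_vequiv D1 D2 h h' : dart_iso D1 D2 h -> cancel h h' -> cancel h' h -> vequiv D1 D2.
Proof.
move=> H K1 K2; exists (fun d => Gen (h d)), (fun d => Gen (h' d)); split.
- exact: dart_iso_hom.
- apply: dart_iso_hom; exact: dart_iso_inv H K1 K2.
- move=> x /=; rewrite K1; exact: vc_refl.
- move=> x /=; rewrite K2; exact: vc_refl.
Qed.

Definition orient_ok (D : diagram) : Prop :=
  [/\ forall d, dout D (dalpha D d) = ~~ dout D d,
      forall c i, dout D (inl (c, rot4 (rot4 i))) = ~~ dout D (inl (c, i)) &
      forall p, dout D (inr (p,true)) = ~~ dout D (inr (p,false))].

Lemma orient_ok_iso D1 D2 h : dart_iso D1 D2 h -> orient_ok D2 -> orient_ok D1.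
Proof.
case=> Hs Ha Ho Hc Hp [O1 O2 O3]; split.
- by move=> d; rewrite -!Ho Ha O1.
- move=> c i; rewrite -!Ho; case: (Hc c i) => c' [i' [E _]].
  by rewrite -[inl (c, rot4 (rot4 i))]/(sigma (sigma (inl (c,i)))) !Hs E O2.
- move=> p; rewrite -!Ho; case: (Hp p false) => p' [b' E].
  rewrite -[inr (p,true)]/(sigma (inr (p,false))) Hs E /=.
  by case: b' E => E /=; rewrite O3 ?negbK.
Qed.

Lemma is_diagram_orient D : is_diagram D -> orient_ok D.
Proof. by case=> _ _ H1 [H2 H3] _; split. Qed.

Lemma diag_iso_dart D1 D2 : diag_iso D1 D2 ->
  exists h h', [/\ dart_iso D1 D2 h, cancel h h' & cancel h' h].
Proof.
case=> fC [fP [r [s [[gC KC1 KC2] [gP KP1 KP2] Hv Ha Ho]]]].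
pose f := fun d : dart (dC D1) (dP D1) =>
  match d with
  | inl (c, i) => inl (fC c, iter (r c) rot4 i)
  | inr (p, b) => inr (fP p, s p (+) b)
  end : dart (dC D2) (dP D2).
pose f' := fun d : dart (dC D2) (dP D2) =>
  match d with
  | inl (c, i) => inl (gC c, iter (3 * r (gC c)) rot4 i)
  | inr (p, b) => inr (gP p, s (gP p) (+) b)
  end : dart (dC D1) (dP D1).
exists f, f'; split.
- split.
  + case=> [[c i]|[p b]] /=; first by rewrite /f iter_rot4_comm.
    by rewrite /f addbN.
  + move=> d; exact: (esym (Ha d)).
  + move=> d; exact: (Ho d).
  + by move=> c i; exists (fC c), (iter (r c) rot4 i); split.
  + by move=> p b; exists (fP p), (s p (+) b).
- case=> [[c i]|[p b]] /=.
  + by rewrite KC1 -iterD addnC -mulSn iter_rot4_4.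
  + by rewrite KP1 addKb.
- case=> [[c i]|[p b]] /=.
  + by rewrite KC2 -iterD -mulSn iter_rot4_4.
  + by rewrite KP2 addKb.
Qed.

Section LD.
Variables (n : nat) (T : tangle n) (o : (dart (tC T) (tP T) + 'I_n)%type -> bool).
Definition LC : finType := tC T.
Definition LP : finType := (tP T + 'I_n)%type.
Definition loc (y : (dart (tC T) (tP T) + 'I_n)%type) : dart LC LP :=
  match y with
  | inl (inl (c, i)) => inl (c, i)
  | inl (inr (p, b)) => inr (inl p, b)
  | inr j => inr (inr j, true)
  end.
Definition LDalpha (d : dart LC LP) : dart LC LP :=
  match d with
  | inl (c, i) => loc (talpha T (inl (inl (c, i))))
  | inr (inl p, b) => loc (talpha T (inl (inr (p, b))))
  | inr (inr j, true) => loc (talpha T (inr j))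
  | inr (inr j, false) => inr (inr j, false)
  end.
Definition LDout (d : dart LC LP) : bool :=
  match d with
  | inl (c, i) => o (inl (inl (c, i)))
  | inr (inl p, b) => o (inl (inr (p, b)))
  | inr (inr j, true) => o (inr j)
  | inr (inr j, false) => ~~ o (inr j)
  end.
Definition LD : diagram := @Diagram LC LP (tvirt T) LDalpha LDout.
Definition bd (j : 'I_n) : dart LC LP := inr (inr j, false).
End LD.
Arguments LD {n} T o.
Arguments LDout {n} T o d.
Arguments LDalpha {n} T d.
Arguments loc {n} T y.

Definition vequivB n (T T' : tangle n) o o' : Prop :=
  exists (phi : dart (LC T) (LP T) -> term (dart (LC T') (LP T')))
         (psi : dart (LC T') (LP T') -> term (dart (LC T) (LP T))),
  [/\ (forall j, phi (bd T j) = Gen (bd T' j) /\ psi (bd T' j) = Gen (bd T j)),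
      vhom (LD T o) (LD T' o') phi, vhom (LD T' o') (LD T o) psi,
      (forall x, @vcong (LD T o) (tsub psi (phi x)) (Gen x)) &
      (forall y, @vcong (LD T' o') (tsub phi (psi y)) (Gen y))].

Arguments vequivB {n} T T' o o'.

Lemma vequivB_sym n (T T' : tangle n) o o' : vequivB T T' o o' -> vequivB T' T o' o.
Proof. by case=> phi [psi [H1 H3 H4 H5 H6]]; exists psi, phi; split => // j; case: (H1 j). Qed.

Definition emb n (O T : tangle n) (d : dart (LC T) (LP T)) : dart (gC O T) (gP O T) :=
  match d with
  | inl (c, i) => inl (inr c, i)
  | inr (inl p, b) => inr (inl (inr p), b)
  | inr (inr j, b) => inr (inr j, b)
  end.

Section Lift.
Variables (n : nat) (O : tangle n) (oO : (dart (tC O) (tP O) + 'I_n)%type -> bool).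

Lemma emb_loc (T : tangle n) y : emb O (loc T y) = embT O y.
Proof. by case: y => [[[c i]|[p b]]|j]. Qed.

Lemma emb_hom (T : tangle n) oT : vhom (LD T oT) (glue n O oO T oT) (fun d => Gen (emb O d)).
Proof.
apply: vhom_base.
- case=> [[c i]|[[p|j] b]] /=.
  + rewrite emb_loc; exact: (@rel_edge (glue n O oO T oT) (inl (inr c, i))).
  + rewrite emb_loc; exact: (@rel_edge (glue n O oO T oT) (inr (inl (inr p), b))).
  + case: b; first by rewrite emb_loc; exact: (@rel_edge (glue n O oO T oT) (inr (inr j, true))).
    exact: vc_refl.
- case=> [p|j] /=.
  + exact: (@rel_point (glue n O oO T oT) (inl (inr p))).
  + exact: (@rel_point (glue n O oO T oT) (inr j)).
- move=> c i H /=; exact: (@rel_flat (glue n O oO T oT) (inr c) i).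
- move=> c i H1 H2 H3 /=; split.
  + exact: (@rel_virtS (glue n O oO T oT) (inr c) i).
  + exact: (@rel_virtT (glue n O oO T oT) (inr c) i).
Qed.

Lemma emb_cong (T : tangle n) oT t u : @vcong (LD T oT) t u ->
  @vcong (glue n O oO T oT) (tsub (fun d => Gen (emb O d)) t) (tsub (fun d => Gen (emb O d)) u).
Proof. exact: emb_hom. Qed.

Variables (T T' : tangle n) (oT : (dart (tC T) (tP T) + 'I_n)%type -> bool)
          (oT' : (dart (tC T') (tP T') + 'I_n)%type -> bool).

Definition liftf (phi : dart (LC T) (LP T) -> term (dart (LC T') (LP T')))
  (x : dart (gC O T) (gP O T)) : term (dart (gC O T') (gP O T')) :=
  match x with
  | inl (inl c, i) => Gen (inl (inl c, i))
  | inl (inr c, i) => tsub (fun d => Gen (emb O d)) (phi (inl (c, i)))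
  | inr (inl (inl p), b) => Gen (inr (inl (inl p), b))
  | inr (inl (inr p), b) => tsub (fun d => Gen (emb O d)) (phi (inr (inl p, b)))
  | inr (inr j, b) => tsub (fun d => Gen (emb O d)) (phi (inr (inr j, b)))
  end.

Lemma liftf_emb phi d : liftf phi (emb O d) = tsub (fun d => Gen (emb O d)) (phi d).
Proof. by case: d => [[c i]|[[p|j] b]]. Qed.

Lemma liftf_embT phi y : liftf phi (embT O y) = tsub (fun d => Gen (emb O d)) (phi (loc T y)).
Proof. by rewrite -emb_loc liftf_emb. Qed.

Lemma liftf_embO phi (Hb : forall j, phi (bd T j) = Gen (bd T' j)) y :
  liftf phi (embO T y) = Gen (embO T' y).
Proof. by case: y => [[[c i]|[p b]]|j] //=; rewrite Hb. Qed.

Lemma galpha_embO (U : tangle n) y : galpha (embO U y) = embO U (talpha O y).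
Proof. by case: y => [[[c i]|[p b]]|j]. Qed.

Lemma via_LD phi (Hphi : vhom (LD T oT) (LD T' oT') phi) t u : @vcong (LD T oT) t u ->
  @vcong (glue n O oO T' oT') (tsub (fun d => tsub (fun d => Gen (emb O d)) (phi d)) t)
                              (tsub (fun d => tsub (fun d => Gen (emb O d)) (phi d)) u).
Proof. move=> H; rewrite -!tsub_comp; apply: emb_cong; exact: Hphi. Qed.

Lemma lift_hom phi (Hb : forall j, phi (bd T j) = Gen (bd T' j))
  (Hphi : vhom (LD T oT) (LD T' oT') phi) :
  vhom (glue n O oO T oT) (glue n O oO T' oT') (liftf phi).
Proof.
have edgeO : forall y, @vcong (glue n O oO T' oT') (liftf phi (embO T y)) (liftf phi (galpha (embO T y))).
  move=> y; rewrite galpha_embO !liftf_embO //.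
  rewrite -galpha_embO; exact: rel_edge.
apply: vhom_base.
- case=> [[[c|c] i]|[[[p|p]|j] b]].
  + exact: (edgeO (inl (inl (c, i)))).
  + have := (via_LD Hphi (@rel_edge (LD T oT) (inl (c, i)))); rewrite /= -liftf_embT; exact.
  + exact: (edgeO (inl (inr (p, b)))).
  + have := (via_LD Hphi (@rel_edge (LD T oT) (inr (inl p, b)))); rewrite /= -liftf_embT; exact.
  + case: b; last exact: (edgeO (inr j)).
    have := (via_LD Hphi (@rel_edge (LD T oT) (inr (inr j, true)))); rewrite /= -liftf_embT; exact.
- case=> [[p|p]|j].
  + exact: (@rel_point (glue n O oO T' oT') (inl (inl p))).
  + exact: (via_LD Hphi (@rel_point (LD T oT) (inl p))).
  + have := (via_LD Hphi (@rel_point (LD T oT) (inr j))); by rewrite /= Hb.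
- case=> c i H.
  + exact: (@rel_flat (glue n O oO T' oT') (inl c) i).
  + exact: (via_LD Hphi (@rel_flat (LD T oT) c i H)).
- case=> c i H1 H2 H3; split.
  + exact: (@rel_virtS (glue n O oO T' oT') (inl c) i).
  + exact: (@rel_virtT (glue n O oO T' oT') (inl c) i).
  + exact: (via_LD Hphi (@rel_virtS (LD T oT) c i H1 H2 H3)).
  + exact: (via_LD Hphi (@rel_virtT (LD T oT) c i H1 H2 H3)).
Qed.
End Lift.
Arguments liftf {n} O {T T'} phi x.

Lemma glue_split n (O T : tangle n) (x : dart (gC O T) (gP O T)) :
  (exists y, x = embO T y) \/ (exists d, x = emb O d).
Proof.
case: x => [[[c|c] i]|[[[p|p]|j] b]].
- by left; exists (inl (inl (c, i))).
- by right; exists (inl (c, i)).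
- by left; exists (inl (inr (p, b))).
- by right; exists (inr (inl p, b)).
- case: b; first by right; exists (inr (inr j, true)).
  by left; exists (inr j).
Qed.

Lemma lift_rt n (O : tangle n) oO (T T' : tangle n) oT phi psi
  (Hb : forall j, phi (bd T j) = Gen (bd T' j)) (Hb' : forall j, psi (bd T' j) = Gen (bd T j))
  (R : forall x, @vcong (LD T oT) (tsub psi (phi x)) (Gen x)) x :
  @vcong (glue n O oO T oT) (tsub (liftf O psi) (liftf O phi x)) (Gen x).
Proof.
case: (glue_split x) => [[y ->]|[d ->]].
- rewrite liftf_embO //= liftf_embO //; exact: vc_refl.
- rewrite liftf_emb tsub_comp (@tsub_ext _ _ _ (fun z => tsub (fun d => Gen (emb O d)) (psi z))); last first.
    by move=> z /=; rewrite liftf_emb.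
  rewrite -tsub_comp; exact: (emb_cong oO (R d)).
Qed.

Lemma lift_vequiv n (O : tangle n) oO (T T' : tangle n) oT oT' :
  vequivB T T' oT oT' -> vequiv (glue n O oO T oT) (glue n O oO T' oT').
Proof.
case=> phi [psi [Hb Hphi Hpsi R S]].
have Hb1 : forall j, phi (bd T j) = Gen (bd T' j) by move=> j; case: (Hb j).
have Hb2 : forall j, psi (bd T' j) = Gen (bd T j) by move=> j; case: (Hb j).
exists (liftf O phi), (liftf O psi); split.
- exact: lift_hom.
- exact: lift_hom.
- exact: lift_rt.
- exact: lift_rt.
Qed.

Definition rot4c (i : 'I_4) : 'I_4 := @Ordinal 4 (i.+1 %% 4) (ltn_pmod _ (ltn0Sn 3)).
Lemma rot4cE : rot4 = rot4c.
Proof. apply: functional_extensionality => i; apply: val_inj; by rewrite val_rot4. Qed.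

Definition insub_c (m x : nat) : option 'I_m :=
  if x < m then (if m is m'.+1 then Some (@Ordinal m'.+1 (x %% m'.+1) (ltn_pmod _ (ltn0Sn m'))) else None)
  else None.

Lemma insub_cE m x : insub_c m x = insub x.
Proof.
rewrite /insub_c; case: ltnP => H.
- rewrite insubT; case: m H => // m H; congr Some; apply: val_inj; by rewrite /= modn_small.
- by rewrite insubF // ltnNge H.
Qed.

Definition ordl (m : nat) : seq 'I_m := pmap (insub_c m) (iota 0 m).
Lemma mem_ordl m (i : 'I_m) : i \in ordl m.
Proof.
rewrite /ordl mem_pmap; apply/mapP; exists (val i); first by rewrite mem_iota /= add0n.
by rewrite insub_cE valK.
Qed.

Definition dl (C P : eqType) (lc : seq C) (lp : seq P) : seq (dart C P) :=
  [seq inl (c, i) | c <- lc, i <- ordl 4] ++ [seq inr (p, b) | p <- lp, b <- [:: false; true]].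
Lemma mem_dl (C P : eqType) lc lp (d : dart C P) :
  (forall c, c \in lc) -> (forall p, p \in lp) -> d \in dl lc lp.
Proof.
move=> Hc Hp; rewrite mem_cat; case: d => [[c i]|[p b]].
- by apply/orP; left; apply/allpairsP; exists (c, i); rewrite /= Hc mem_ordl.
- apply/orP; right; apply/allpairsP; exists (p, b); rewrite /= Hp; by case: b.
Qed.

Fixpoint vece (G : Type) (e : G -> G -> bool) (t : term G) (h : G) : Z :=
  match t with
  | Gen _ => 0%Z
  | Star x b => Z.add (vece e x h) (if e (rt b) h then 1%Z else 0%Z)
  | Circ x b => Z.sub (vece e x h) (if e (rt b) h then 1%Z else 0%Z)
  end.

Definition nfeql (G : Type) (e : G -> G -> bool) (l : seq G) (a b : term G) : bool :=
  e (rt a) (rt b) && all (fun h => Z.eqb (vece e a h) (vece e b h)) l.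

Lemma vece_vec (G : finType) (e : G -> G -> bool) (He : forall x y, e x y = (x == y)) t h :
  vece e t h = vec t h.
Proof. by elim: t => //= x -> b _; rewrite He. Qed.

Lemma nfeql_nfeq (D : diagram) e (He : forall x y, e x y = (x == y)) (l : seq (dart (dC D) (dP D))) a b :
  (forall h, h \in l) -> nfeql e l a b -> nfeq a b.
Proof.
move=> Hl /andP [H1 /allP H2]; rewrite /nfeq -He H1 /=; apply/forallP => h.
by rewrite -!(vece_vec He); apply: H2.
Qed.

Section Eps.
Variable D : diagram.
Notation G := (dart (dC D) (dP D)).
Notation "a ~~> b" := (@vcong D a b) (at level 70).
Variables (al : G -> G) (ou : G -> bool) (vi : dC D -> bool) (deq : G -> G -> bool).
Hypotheses (Hal : forall d, dalpha D d = al d) (Hou : forall d, dout D d = ou d)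
           (Hvi : forall c, dvirt D c = vi c).

Definition isLR (c : dC D) (k : 'I_4) : bool :=
  ~~ ou (inl (c, rot4c (rot4c k))) && ou (inl (c, rot4c (rot4c (rot4c k)))).
Definition isLL (c : dC D) (k : 'I_4) : bool :=
  ~~ ou (inl (c, rot4c (rot4c (rot4c k)))) && ou (inl (c, k)).

Fixpoint rootstr (f : nat) (x : G) : G :=
  match f with
  | 0 => x
  | S f' =>
    match x with
    | inl (c, k) =>
      if ~~ ou x then (if deq (al x) x then x else rootstr f' (al x))
      else if ~~ vi c then rootstr f' (inl (c, rot4c (rot4c k)))
      else if isLR c k || isLL c k then rootstr f' (inl (c, rot4c (rot4c k)))
      else x
    | inr (p, b) =>
      if ~~ ou x then (if deq (al x) x then x else rootstr f' (al x))
      else rootstr f' (inr (p, ~~ b))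
    end
  end.

Fixpoint veps (f : nat) (x : G) : term G :=
  match f with
  | 0 => Gen x
  | S f' =>
    match x with
    | inl (c, k) =>
      if ~~ ou x then (if deq (al x) x then Gen x else veps f' (al x))
      else if ~~ vi c then veps f' (inl (c, rot4c (rot4c k)))
      else if isLR c k then Star (veps f' (inl (c, rot4c (rot4c k)))) (Gen (rootstr f' (inl (c, rot4c k))))
      else if isLL c k then Circ (veps f' (inl (c, rot4c (rot4c k)))) (Gen (rootstr f' (inl (c, rot4c (rot4c (rot4c k))))))
      else Gen x
    | inr (p, b) =>
      if ~~ ou x then (if deq (al x) x then Gen x else veps f' (al x))
      else veps f' (inr (p, ~~ b))
    end
  end.

Lemma relLR c k : vi c -> isLR c k ->
  Gen (inl (c, k)) ~~> Star (Gen (inl (c, rot4c (rot4c k)))) (Gen (inl (c, rot4c k))).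
Proof.
rewrite /isLR -!rot4cE -!Hou -Hvi => V /andP [H1 H2].
have := @rel_virtS D c (rot4 (rot4 k)) V (negbTE H1) H2.
by rewrite !rot4_4.
Qed.

Lemma relLL c k : vi c -> isLL c k ->
  Gen (inl (c, k)) ~~> Circ (Gen (inl (c, rot4c (rot4c k)))) (Gen (inl (c, rot4c (rot4c (rot4c k))))).
Proof.
rewrite /isLL -!rot4cE -!Hou -Hvi => V /andP [H1 H2].
have H2' : dout D (inl (c, rot4 (rot4 (rot4 (rot4 k))))) = true by rewrite rot4_4.
have := @rel_virtT D c (rot4 (rot4 (rot4 k))) V (negbTE H1) H2'.
by rewrite !rot4_4.
Qed.

Lemma flat_step c k : vi c = false -> Gen (inl (c, k)) ~~> Gen (inl (c, rot4c (rot4c k))).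
Proof. rewrite -rot4cE -Hvi => H; exact: rel_flat. Qed.

Lemma edge_step x : Gen x ~~> Gen (al x).
Proof. rewrite -Hal; exact: rel_edge. Qed.

Lemma idx_step (x : G) t p : Gen x ~~> t ->
  Star p (Gen x) ~~> Star p (Gen (rt t)) /\ Circ p (Gen x) ~~> Circ p (Gen (rt t)).
Proof.
move=> H; case: (root_star p t) => H1 H2; split.
- apply: vc_trans H1; exact: vstarR.
- apply: vc_trans H2; exact: vcircR.
Qed.

Lemma point_step p b : Gen (inr (p, b)) ~~> Gen (inr (p, ~~ b)).
Proof. case: b; [apply: vc_sym; exact: rel_point | exact: rel_point]. Qed.

Lemma rootstr_sound f x p :
  Star p (Gen x) ~~> Star p (Gen (rootstr f x)) /\ Circ p (Gen x) ~~> Circ p (Gen (rootstr f x)).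
Proof.
elim: f x => [|f IH] x /=; first by split; apply: vrefl.
have step : forall y, Gen x ~~> Gen y ->
  Star p (Gen x) ~~> Star p (Gen (rootstr f y)) /\ Circ p (Gen x) ~~> Circ p (Gen (rootstr f y)).
  move=> y H; case: (IH y) => I1 I2; split.
  - apply: vc_trans I1; exact: vstarR.
  - apply: vc_trans I2; exact: vcircR.
move: step; case: x => [[c k]|[q b]] step.
- case: ifP => _.
    case: ifP => _; first by split; apply: vrefl.
    apply: step; exact: edge_step.
  case: ifP => V.
    apply: step; apply: flat_step; exact: negbTE.
  case: ifP => L; last by split; apply: vrefl.
  case/orP: L => L.
  + case: (idx_step p (relLR (negbFE V) L)) => J1 J2 /=.
    case: (IH (inl (c, rot4c (rot4c k)))) => I1 I2; split.
    * apply: vc_trans J1 I1.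
    * apply: vc_trans J2 I2.
  + case: (idx_step p (relLL (negbFE V) L)) => J1 J2 /=.
    case: (IH (inl (c, rot4c (rot4c k)))) => I1 I2; split.
    * apply: vc_trans J1 I1.
    * apply: vc_trans J2 I2.
- case: ifP => _.
    case: ifP => _; first by split; apply: vrefl.
    apply: step; exact: edge_step.
  apply: step; exact: point_step.
Qed.

Lemma veps_sound f x : Gen x ~~> veps f x.
Proof.
elim: f x => [|f IH] x /=; first exact: vrefl.
case: x => [[c k]|[q b]].
- case: ifP => _.
    case: ifP => _; first exact: vrefl.
    apply: vc_trans (IH _); exact: edge_step.
  case: ifP => V.
    apply: vc_trans (IH _); apply: flat_step; exact: negbTE.
  case: ifP => L.
    apply: vc_trans; first exact: (relLR (negbFE V) L).
    apply: vc_trans; first exact: (vstarL _ (IH _)).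
    by case: (rootstr_sound f (inl (c, rot4c k)) (veps f (inl (c, rot4c (rot4c k))))).
  case: ifP => L2; last exact: vrefl.
  apply: vc_trans; first exact: (relLL (negbFE V) L2).
  apply: vc_trans; first exact: (vcircL _ (IH _)).
  by case: (rootstr_sound f (inl (c, rot4c (rot4c (rot4c k)))) (veps f (inl (c, rot4c (rot4c k))))).
- case: ifP => _.
    case: ifP => _; first exact: vrefl.
    apply: vc_trans (IH _); exact: edge_step.
  apply: vc_trans (IH _); exact: point_step.
Qed.

Lemma check_sound (e : G -> G -> bool) (He : forall x y, e x y = (x == y))
  (l : seq G) (Hl : forall h, h \in l) f (a b : term G) :
  nfeql e l (tsub (veps f) a) (tsub (veps f) b) -> a ~~> b.
Proof.
move=> H; apply: vc_trans; first exact: (tsub_cong a (veps_sound f)).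
apply: vc_trans; first exact: (nfeq_sound (nfeql_nfeq He Hl H)).
apply: vc_sym; exact: (tsub_cong b (veps_sound f)).
Qed.
End Eps.
Arguments veps : clear implicits.
Arguments rootstr : clear implicits.

Definition ord4 (y : nat) : 'I_4 := @Ordinal 4 (y %% 4) (ltn_pmod _ (ltn0Sn 3)).

Definition decode_c k n (y : nat) : option (dart 'I_k 'I_0 + 'I_n)%type :=
  if y < 4 * k then omap (fun c : 'I_k => inl (inl (c, ord4 y))) (insub_c k (y %/ 4))
  else omap (fun j : 'I_n => inr j) (insub_c n (y - 4 * k)).

Lemma decode_cE k n y : @decode k n y = decode_c k n y.
Proof.
rewrite /decode /decode_c !insub_cE; case: ifP => // _.
have -> : inord (y %% 4) = ord4 y :> 'I_4.
  by apply: val_inj; rewrite /= inordK // ltn_pmod.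
by [].
Qed.

Definition partner_c (s : seq (nat * nat)) (x : nat) : option nat :=
  match [seq e <- s | eqn e.1 x || eqn e.2 x] with
  | e :: _ => Some (if eqn e.1 x then e.2 else e.1)
  | [::] => None
  end.
Lemma partner_cE s x : partner_c s x = partner s x.
Proof. by []. Qed.

Definition ta_table k n (s : seq (nat * nat)) (d : (dart 'I_k 'I_0 + 'I_n)%type) :=
  odflt d (obind (decode_c k n) (partner_c s (code d))).

Lemma talpha_table k n kind s : talpha (@table_tangle k n kind s) =1 ta_table s.
Proof.
move=> d; rewrite /table_tangle /ta_table /= partner_cE; case: (partner s (code d)) => //= y.
by rewrite decode_cE.
Qed.

Definition refl4c (i : 'I_4) : 'I_4 := ord4 (4 - i).
Lemma refl4cE : refl4 = refl4c.
Proof. apply: functional_extensionality => i; apply: val_inj; by rewrite /= inordK // ltn_pmod. Qed.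

Definition mref_c n (C P : Type) (d : (dart C P + 'I_n)%type) : (dart C P + 'I_n)%type :=
  match d with
  | inl (inl (c, i)) => inl (inl (c, refl4c i))
  | _ => d
  end.

Lemma talpha_mirror n (T : tangle n) ta : talpha T =1 ta ->
  talpha (mirror T) =1 (fun d => mref_c (ta (mref_c d))).
Proof.
move=> H d; rewrite /mirror /= H.
have E : forall x : (dart (tC T) (tP T) + 'I_n)%type, mref x = mref_c x.
  by case=> [[[c i]|[p b]]|j] //=; rewrite refl4cE.
by rewrite !E.
Qed.

Record cdesc (D : diagram) := CDesc {
  c_lc : seq (dC D); c_lp : seq (dP D);
  c_al : dart (dC D) (dP D) -> dart (dC D) (dP D);
  c_ou : dart (dC D) (dP D) -> bool;
  c_vi : dC D -> bool;
  c_cc : dC D -> nat * nat;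
  c_pc : dP D -> nat * nat }.

Fixpoint eqln (l1 l2 : seq nat) : bool :=
  match l1, l2 with
  | [::], [::] => true
  | a :: l, b :: m => eqn a b && eqln l m
  | _, _ => false
  end.

Lemma eqlnP l1 l2 : eqln l1 l2 -> l1 = l2.
Proof.
elim: l1 l2 => [|a l IH] [|b m] //= /andP [/eqnP -> H]; by rewrite (IH m H).
Qed.

Definition dcode (D : diagram) (X : cdesc D) (d : dart (dC D) (dP D)) : seq nat :=
  match d with
  | inl (c, i) => [:: 0; (c_cc X c).1; (c_cc X c).2; nat_of_ord i]
  | inr (p, b) => [:: 1; (c_pc X p).1; (c_pc X p).2; nat_of_bool b]
  end.
Definition cdeq (D : diagram) (X : cdesc D) (x y : dart (dC D) (dP D)) : bool := eqln (dcode X x) (dcode X y).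

Definition cvalid (D : diagram) (X : cdesc D) : Prop :=
  [/\ (forall c, c \in c_lc X), (forall p, p \in c_lp X),
      (forall d, dalpha D d = c_al X d), (forall d, dout D d = c_ou X d) &
      (forall c, dvirt D c = c_vi X c) /\ (injective (c_cc X) /\ injective (c_pc X))].

Lemma cdeq_eq D (X : cdesc D) : cvalid X -> forall x y, cdeq X x y = (x == y).
Proof.
case=> _ _ _ _ [_ [Ic Ip]] x y; apply/idP/eqP => [H|->]; last first.
  by rewrite /cdeq; elim: (dcode X y) => //= a l ->; rewrite eqnE eqxx.
move: H => /eqlnP; case: x => [[c i]|[p b]]; case: y => [[c' i']|[p' b']] //= [E1 E2 E3].
- have Ec : c_cc X c = c_cc X c' by move: E1 E2; case: (c_cc X c) => ? ?; case: (c_cc X c') => ? ? /= -> ->.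
  by rewrite (Ic _ _ Ec) (val_inj E3).
- have Ep : c_pc X p = c_pc X p' by move: E1 E2; case: (c_pc X p) => ? ?; case: (c_pc X p') => ? ? /= -> ->.
  by rewrite (Ip _ _ Ep); case: b b' E3 => [] [].
Qed.

Definition cl (D : diagram) (X : cdesc D) := dl (c_lc X) (c_lp X).
Definition cveps (D : diagram) (X : cdesc D) F := veps D (c_al X) (c_ou X) (c_vi X) (cdeq X) F.

Lemma cvalid_check D (X : cdesc D) F (a b : term (dart (dC D) (dP D))) : cvalid X ->
  nfeql (cdeq X) (cl X) (tsub (cveps X F) a) (tsub (cveps X F) b) -> @vcong D a b.
Proof.
move=> V; have E := cdeq_eq V; case: V => Hc Hp Ha Ho [Hv _] H.
apply: (@check_sound D (c_al X) (c_ou X) (c_vi X) (cdeq X) Ha Ho Hv (cdeq X) E (cl X) _ F a b H).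
by move=> h; apply: mem_dl.
Qed.

Section Check.
Variables (D1 D2 : diagram) (X1 : cdesc D1) (X2 : cdesc D2) (F : nat).
Variable phi : dart (dC D1) (dP D1) -> term (dart (dC D2) (dP D2)).

Definition ch (a b : term (dart (dC D2) (dP D2))) : bool :=
  nfeql (cdeq X2) (cl X2) (tsub (cveps X2 F) a) (tsub (cveps X2 F) b).

Definition rels_ok : bool :=
  [&& all (fun d => ch (phi d) (phi (c_al X1 d))) (cl X1),
      all (fun p => ch (phi (inr (p, false))) (phi (inr (p, true)))) (c_lp X1),
      all (fun c => all (fun i => if c_vi X1 c then true else
          ch (phi (inl (c, i))) (phi (inl (c, rot4c (rot4c i))))) (ordl 4)) (c_lc X1) &
      all (fun c => all (fun i =>
         if (c_vi X1 c && ~~ c_ou X1 (inl (c, i)) && c_ou X1 (inl (c, rot4c i))) then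
         ch (phi (inl (c, rot4c (rot4c i)))) (Star (phi (inl (c, i))) (phi (inl (c, rot4c (rot4c (rot4c i)))))) &&
         ch (phi (inl (c, rot4c i))) (Circ (phi (inl (c, rot4c (rot4c (rot4c i))))) (phi (inl (c, i)))) else true)
         (ordl 4)) (c_lc X1)].

Lemma rels_ok_hom : cvalid X1 -> cvalid X2 -> rels_ok -> vhom D1 D2 phi.
Proof.
move=> V1 V2; case: (V1) => Hc Hp Ha Ho [Hv _].
case/and4P => /allP He /allP Hpp /allP Hf /allP Hvv.
have C : forall a b, ch a b -> @vcong D2 a b by move=> a b; exact: cvalid_check.
apply: vhom_base.
- move=> d; rewrite Ha; apply: C; apply: He; exact: mem_dl.
- move=> p; apply: C; exact: Hpp.
- move=> c i H; have := allP (Hf c (Hc c)) i (mem_ordl i).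
  rewrite -Hv H /= -rot4cE; exact: C.
- move=> c i H1 H2 H3; have := allP (Hvv c (Hc c)) i (mem_ordl i).
  rewrite -Hv -!Ho -!rot4cE H1 H2 H3 /= => /andP [K1 K2]; split; exact: C.
Qed.

Variable psi : dart (dC D2) (dP D2) -> term (dart (dC D1) (dP D1)).
Definition rt_ok : bool :=
  all (fun x => nfeql (cdeq X1) (cl X1) (tsub (cveps X1 F) (tsub psi (phi x))) (tsub (cveps X1 F) (Gen x))) (cl X1).

Lemma rt_ok_sound : cvalid X1 -> rt_ok -> forall x, @vcong D1 (tsub psi (phi x)) (Gen x).
Proof.
move=> V1 /allP H x; have M : x \in cl X1 by case: (V1) => Hc Hp _ _ _; exact: mem_dl.
exact: (cvalid_check V1 (H x M)).
Qed.
End Check.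
Arguments rels_ok : clear implicits.
Arguments rt_ok : clear implicits.

Fixpoint bitlists (m : nat) : seq (seq bool) :=
  if m is m'.+1 then [seq b :: l | b <- [:: false; true], l <- bitlists m'] else [:: [::]].

Lemma mem_bitlists (l : seq bool) : l \in bitlists (size l).
Proof.
elim: l => [|b l IH] //.
change (b :: l \in [seq x :: y | x <- [:: false; true], y <- bitlists (size l)]).
by apply/allpairsP; exists (b, l); rewrite /= IH; case: b.
Qed.

Lemma bits_cover n (f : 'I_n -> bool) : exists2 l, l \in bitlists n & forall j : 'I_n, nth false l j = f j.
Proof.
exists (mkseq (fun i => odflt false (omap f (insub_c n i))) n).
  by have := mem_bitlists (mkseq (fun i => odflt false (omap f (insub_c n i))) n); rewrite size_mkseq.
by move=> j; rewrite nth_mkseq // insub_cE valK.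
Qed.

Section Local.
Variables (n : nat) (j0 : 'I_n) (F : nat).

Definition LDalpha_ta (T : tangle n) (ta : (dart (tC T) (tP T) + 'I_n)%type -> (dart (tC T) (tP T) + 'I_n)%type)
  (d : dart (LC T) (LP T)) : dart (LC T) (LP T) :=
  match d with
  | inl (c, i) => loc T (ta (inl (inl (c, i))))
  | inr (inl p, b) => loc T (ta (inl (inr (p, b))))
  | inr (inr j, true) => loc T (ta (inr j))
  | inr (inr j, false) => inr (inr j, false)
  end.

Definition LDdesc (T : tangle n) (lc : seq (tC T)) (lp : seq (tP T)) ta
  (cC : tC T -> nat) (cP : tP T -> nat) o : cdesc (LD T o) :=
  @CDesc (LD T o) lc ([seq inl p | p <- lp] ++ [seq inr j | j <- ordl n]) (LDalpha_ta ta) (LDout T o) (tvirt T)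
    (fun c => (0, cC c)) (fun p => match p with inl p => (0, cP p) | inr j => (1, nat_of_ord j) end).

Lemma LDdesc_valid (T : tangle n) lc lp ta cC cP o :
  (forall c, c \in lc) -> (forall p, p \in lp) -> talpha T =1 ta -> injective cC -> injective cP ->
  cvalid (@LDdesc T lc lp ta cC cP o).
Proof.
move=> Hc Hp Ht IC IP; split.
- exact: Hc.
- case=> [p|j]; rewrite /= mem_cat.
  + by apply/orP; left; apply/mapP; exists p.
  + by apply/orP; right; apply/mapP; exists j => //; exact: mem_ordl.
- by case=> [[c i]|[[p|j] [|]]] //=; rewrite Ht.
- by [].
- split => //; split.
  + by move=> c c' [/IC].
  + case=> [p|j] [p'|j'] //= [].
    * by move/IP => ->.
    * by move/val_inj => ->.
Qed.

Definition trb (T T' : tangle n) (g : dart (LC T) (LP T)) : dart (LC T') (LP T') :=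
  match g with
  | inr (inr j, b) => inr (inr j, b)
  | _ => bd T' j0
  end.

Definition mkphi (T T' : tangle n) o (X : cdesc (LD T o)) (x : dart (LC T) (LP T)) : term (dart (LC T') (LP T')) :=
  match x with
  | inr (inr j, false) => Gen (bd T' j)
  | _ => tsub (fun g => Gen (trb T' g)) (cveps X F x)
  end.

Definition check_pair (T T' : tangle n) o o' (X : cdesc (LD T o)) (X' : cdesc (LD T' o')) : bool :=
  [&& rels_ok (LD T o) (LD T' o') X X' F (mkphi T' X),
      rels_ok (LD T' o') (LD T o) X' X F (mkphi T X'),
      rt_ok (LD T o) (LD T' o') X F (mkphi T' X) (mkphi T X') &
      rt_ok (LD T' o') (LD T o) X' F (mkphi T X') (mkphi T' X)].

Lemma check_pair_ok (T T' : tangle n) o o' X X' : cvalid X -> cvalid X' ->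
  @check_pair T T' o o' X X' -> vequivB T T' o o'.
Proof.
move=> V V' /and4P [H1 H2 H3 H4].
exists (mkphi T' X), (mkphi T X'); split.
- by [].
- exact: rels_ok_hom H1.
- exact: rels_ok_hom H2.
- exact: rt_ok_sound H3.
- exact: rt_ok_sound H4.
Qed.

Fixpoint endp (T : tangle n) ta (f : nat) (w : (dart (tC T) (tP T) + 'I_n)%type) : option 'I_n :=
  match f with
  | 0 => None
  | S f' =>
    match ta w with
    | inr j => Some j
    | inl (inl (c, i)) => endp ta f' (inl (inl (c, rot4c (rot4c i))))
    | inl (inr (p, b)) => endp ta f' (inl (inr (p, ~~ b)))
    end
  end.

Definition canon (T : tangle n) ta (bb : 'I_n -> bool) (x : (dart (tC T) (tP T) + 'I_n)%type) : bool :=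
  match x with
  | inr j => bb j
  | inl _ => match @endp T ta F x with Some j => ~~ bb j | None => false end
  end.

Definition tcons (T : tangle n) (o : (dart (tC T) (tP T) + 'I_n)%type -> bool) : Prop :=
  [/\ forall d, o (talpha T d) = ~~ o d,
      forall c i, o (inl (inl (c, rot4 (rot4 i)))) = ~~ o (inl (inl (c, i))) &
      forall p, o (inl (inr (p, true))) = ~~ o (inl (inr (p, false)))].

Definition tdl (T : tangle n) (lc : seq (tC T)) (lp : seq (tP T)) : seq (dart (tC T) (tP T) + 'I_n)%type :=
  [seq inl d | d <- dl lc lp] ++ [seq inr j | j <- ordl n].

Definition tcons_b (T : tangle n) lc lp ta (o : (dart (tC T) (tP T) + 'I_n)%type -> bool) : bool :=
  [&& all (fun d => o (ta d) (+) o d) (@tdl T lc lp),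
      all (fun c => all (fun i => o (inl (inl (c, rot4c (rot4c i)))) (+) o (inl (inl (c, i)))) (ordl 4)) lc &
      all (fun p => o (inl (inr (p, true))) (+) o (inl (inr (p, false)))) lp].

Lemma endp_ok (T : tangle n) ta o f w j : talpha T =1 ta -> @tcons T o -> endp ta f w = Some j -> o w = ~~ o (inr j).
Proof.
move=> Ht [H1 H2 H3]; elim: f w => [|f IH] w //=.
case E: (ta w) => [[[c i]|[p b]]|j'].
- move/IH => <-; by rewrite -rot4cE H2 -E -Ht H1 negbK.
- move/IH => <-; case: b E => E /=.
  + by rewrite -(negbK (o (inl (inr (p, false))))) -H3 -E -Ht H1 negbK.
  + by rewrite H3 -E -Ht H1 negbK.
- by case=> <-; rewrite -E -Ht H1 negbK.
Qed.

Definition all_endp (T : tangle n) (lc : seq (tC T)) (lp : seq (tP T)) ta : bool :=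
  all (fun x => endp ta F (inl x) != None) (dl lc lp).

Lemma canon_eq (T : tangle n) lc lp ta o : (forall c, c \in lc) -> (forall p, p \in lp) ->
  talpha T =1 ta -> @tcons T o -> all_endp lc lp ta ->
  forall bb, (forall j, bb j = o (inr j)) -> o =1 canon ta bb.
Proof.
move=> Hc Hp Ht Hco /allP He bb Hb [x|j] /=; last by rewrite Hb.
have := He x (mem_dl x Hc Hp); case E: (endp ta F (inl x)) => [j|] // _.
by rewrite Hb (endp_ok Ht Hco E).
Qed.

Lemma tcons_tb (T : tangle n) lc lp ta o : talpha T =1 ta -> @tcons T o -> @tcons_b T lc lp ta o.
Proof.
move=> Ht [H1 H2 H3]; apply/and3P; split.
- by apply/allP => d _; rewrite -Ht H1 addNb addbb.
- by apply/allP => c _; apply/allP => i _; rewrite -rot4cE H2 addNb addbb.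
- by apply/allP => p _; rewrite H3 addNb addbb.
Qed.

Definition bigcheck (T T' : tangle n) lc lp ta cC cP lc' lp' ta' cC' cP' : bool :=
  [&& @all_endp T lc lp ta, @all_endp T' lc' lp' ta' &
  all (fun l =>
    let bb := fun j : 'I_n => nth false l j in
    if (@tcons_b T lc lp ta (canon ta bb) && @tcons_b T' lc' lp' ta' (canon ta' bb)) then
    @check_pair T T' (canon ta bb) (canon ta' bb)
        (@LDdesc T lc lp ta cC cP (canon ta bb)) (@LDdesc T' lc' lp' ta' cC' cP' (canon ta' bb)) else true)
   (bitlists n)].

Lemma bigcheck_ok (T T' : tangle n) lc lp ta cC cP lc' lp' ta' cC' cP' o o' :
  (forall c, c \in lc) -> (forall p, p \in lp) -> talpha T =1 ta -> injective cC -> injective cP ->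
  (forall c, c \in lc') -> (forall p, p \in lp') -> talpha T' =1 ta' -> injective cC' -> injective cP' ->
  @bigcheck T T' lc lp ta cC cP lc' lp' ta' cC' cP' -> @tcons T o -> @tcons T' o' ->
  (forall j, o (inr j) = o' (inr j)) -> vequivB T T' o o'.
Proof.
move=> Hc Hp Ht IC IP Hc' Hp' Ht' IC' IP' /and3P [A1 A2 /allP B] C1 C2 Eb.
case: (bits_cover (fun j => o (inr j))) => l Hl Hn.
have E1 := canon_eq Hc Hp Ht C1 A1 Hn.
have E2 : o' =1 canon ta' (fun j => nth false l j).
  apply: (canon_eq Hc' Hp' Ht' C2 A2) => j; by rewrite Hn Eb.
have := B l Hl; rewrite /=.
have T1 := tcons_tb lc lp Ht C1; have T2 := tcons_tb lc' lp' Ht' C2.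
rewrite (functional_extensionality _ _ E1) in T1 *.
rewrite (functional_extensionality _ _ E2) in T2 *.
rewrite T1 T2 /= => H.
apply: check_pair_ok H; exact: LDdesc_valid.
Qed.
End Local.

Lemma refl4K (i : 'I_4) : refl4 (refl4 i) = i.
Proof.
apply: val_inj; rewrite /refl4 /= !inordK ?ltn_pmod //.
by case: i => [[|[|[|[|m]]]] Hm].
Qed.

Lemma mrefK n (C P : Type) (d : (dart C P + 'I_n)%type) : mref (mref d) = d.
Proof. by case: d => [[[c i]|[p b]]|j] //=; rewrite refl4K. Qed.

Lemma mirrorK n (T : tangle n) : mirror (mirror T) = T.
Proof.
case: T => C P v a; rewrite /mirror /=; congr Tangle.
by apply: functional_extensionality => d; rewrite !mrefK.
Qed.

Definition mirm n (b : bool) (T : tangle n) : tangle n := if b then mirror T else T.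

Lemma move_pair_norm n (T T' : tangle n) : move_pair T T' ->
  exists (S S' : tangle n) (m : bool), std_move S S' /\
    ((T = mirm m S /\ T' = mirm m S') \/ (T = mirm m S' /\ T' = mirm m S)).
Proof.
elim=> {n T T'}.
- move=> n T T' H; exists T, T', false; split => //; by left.
- move=> n T T' _ [S [S' [m [H [[-> ->]|[-> ->]]]]]]; exists S, S', m; split => //; by [right | left].
- move=> n T T' _ [S [S' [m [H [[-> ->]|[-> ->]]]]]]; exists S, S', (~~ m); split => //.
  + by left; case: m; rewrite /mirm /= ?mirrorK.
  + by right; case: m; rewrite /mirm /= ?mirrorK.
Qed.

Definition vo k (i : 'I_k) := nat_of_ord i.
Lemma vo_inj k : injective (@vo k).
Proof. exact: val_inj. Qed.

Definition mta n (C P : Type) (ta : (dart C P + 'I_n)%type -> (dart C P + 'I_n)%type) :=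
  fun d => mref_c (ta (mref_c d)).

Lemma table_local0 k k' n j0 F (kind : 'I_k -> bool) (kind' : 'I_k' -> bool) s s' :
  @bigcheck n j0 F (table_tangle n kind s) (table_tangle n kind' s')
     (ordl k) (ordl 0) (ta_table (k:=k) (n:=n) s) (@vo k) (@vo 0)
     (ordl k') (ordl 0) (ta_table (k:=k') (n:=n) s') (@vo k') (@vo 0) ->
  forall o o', tcons o -> tcons o' -> (forall j, o (inr j) = o' (inr j)) ->
  vequivB (mirm false (table_tangle n kind s)) (mirm false (table_tangle n kind' s')) o o'.
Proof.
move=> B o o' C1 C2 E; apply: (bigcheck_ok _ _ _ _ _ _ _ _ _ _ B C1 C2 E);
  by [exact: mem_ordl | exact: talpha_table | exact: vo_inj].
Qed.

Lemma table_local1 k k' n j0 F (kind : 'I_k -> bool) (kind' : 'I_k' -> bool) s s' :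
  @bigcheck n j0 F (mirror (table_tangle n kind s)) (mirror (table_tangle n kind' s'))
     (ordl k) (ordl 0) (mta (ta_table (k:=k) (n:=n) s)) (@vo k) (@vo 0)
     (ordl k') (ordl 0) (mta (ta_table (k:=k') (n:=n) s')) (@vo k') (@vo 0) ->
  forall o o', tcons o -> tcons o' -> (forall j, o (inr j) = o' (inr j)) ->
  vequivB (mirm true (table_tangle n kind s)) (mirm true (table_tangle n kind' s')) o o'.
Proof.
move=> B o o' C1 C2 E; apply: (bigcheck_ok _ _ _ _ _ _ _ _ _ _ B C1 C2 E);
  by [exact: mem_ordl | apply: talpha_mirror; exact: talpha_table | exact: vo_inj].
Qed.

Lemma std_local n (S S' : tangle n) (m : bool) : std_move S S' ->
  forall o o', tcons o -> tcons o' -> (forall j, o (inr j) = o' (inr j)) ->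
  vequivB (mirm m S) (mirm m S') o o'.
Proof.
case: m => -[] {n S S'};
  (apply: (@table_local1 _ _ _ ord0 30) || apply: (@table_local0 _ _ _ ord0 30)); vm_compute; reflexivity.
Qed.

Lemma galpha_embT n (O : tangle n) oO (T : tangle n) oT y :
  dalpha (glue n O oO T oT) (embT O y) = embT O (talpha T y).
Proof. by case: y => [[[c i]|[p b]]|j]. Qed.

Lemma gout_embT n (O : tangle n) oO (T : tangle n) oT y :
  dout (glue n O oO T oT) (embT O y) = oT y.
Proof. by case: y => [[[c i]|[p b]]|j]. Qed.

Lemma glue_tcons n (O : tangle n) oO (T : tangle n) oT :
  orient_ok (glue n O oO T oT) -> tcons oT.
Proof.
case=> O1 O2 O3; split.
- move=> d; have := O1 (embT O d); by rewrite galpha_embT !gout_embT.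
- move=> c i; exact: (O2 (inr c) i).
- move=> p; exact: (O3 (inl (inr p))).
Qed.

Lemma glue_bd n (O : tangle n) oO (T : tangle n) oT j :
  orient_ok (glue n O oO T oT) -> oT (inr j) = ~~ oO (inr j).
Proof. case=> _ _ O3; exact: (O3 (inr j)). Qed.

Lemma iso_side (L : diagram) n (O : tangle n) oO (T : tangle n) oT :
  is_diagram L -> diag_iso (glue n O oO T oT) L ->
  vequiv L (glue n O oO T oT) /\ orient_ok (glue n O oO T oT).
Proof.
move=> HL Hi; case: (diag_iso_dart Hi) => h [h' [H K1 K2]]; split.
- apply: vequiv_sym; exact: dart_iso_vequiv H K1 K2.
- apply: orient_ok_iso H _; exact: is_diagram_orient.
Qed.

Theorem theorem4p3 (L L' : diagram) :
  is_diagram L -> is_diagram L' -> flat_move L L' ->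
  vfb_iso (@vstar L) (@vcirc L) (@vstar L') (@vcirc L').
Proof.
move=> HL HL' [n [O [T [T' [oO [oT [oT' [Hmp Hi Hi']]]]]]]].
case: (iso_side HL Hi) => V1 OK1; case: (iso_side HL' Hi') => V2 OK2.
apply: vequiv_iso; apply: (vequiv_trans V1); apply: vequiv_trans _ (vequiv_sym V2).
apply: lift_vequiv.
have C1 := glue_tcons OK1; have C2 := glue_tcons OK2.
have E : forall j, oT (inr j) = oT' (inr j) by move=> j; rewrite (glue_bd j OK1) (glue_bd j OK2).
case: (move_pair_norm Hmp) => S [S' [m [Hs [[ET ET']|[ET ET']]]]]; subst T T'.
- exact: std_local.
- apply: vequivB_sym; apply: std_local => // j; by rewrite E.
Qed.
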